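(* Let $N\ge2$ be an integer. Consider, for $\lambda\in\mathbb{R}$, the equation $$-w''+(N-2)w'+(N-1)w=\frac{N-1}{2}e^{-t}w^2+\lambda e^{(N-3)t}\int_0^{e^{-t}}g(s)\,ds \qquad (\ast)$$ and the three problems: (D) $w\in C^2([0,\infty))$ solves $(\ast)$ for $t\ge0$ with $w(0)=0$, $\lim_{t\to\infty}w(t)=0$, where $g\in L^1([0,1])$ and $\lim_{t\to\infty}e^{(N-3)t}\int_0^{e^{-t}}g(s)\,ds=0$; (Nav) $w\in C^2([0,\infty))$ solves $(\ast)$ for $t\ge0$ with $w'(0)-(N-1)w(0)=0$, $\lim_{t\to\infty}w(t)=0$, with $g$ as in (D); (E) $w\in C^2(\mathbb{R})$ solves $(\ast)$ for $t\in\mathbb{R}$ with $\lim_{t\to\pm\infty}w(t)=0$, where $g\in L^1([0,\infty))$ and $\lim_{t\to\pm\infty}e^{(N-3)t}\int_0^{e^{-t}}g(s)\,ds=0$. Assume in each case that $g\ge0$ a.e. and $\operatorname{ess\,sup}g>0$. Then, for each of the problems (D), (Nav), (E), there exists $\lambda_0>0$ such that for every $\lambda>\lambda_0$ the problem has no solution.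
   Context: These are the radial Dirichlet, Navier and entire problems for $\Delta^2u=S_2[u]+\lambda f$ ($S_2$ the sum of $2\times2$ principal minors of the Hessian), obtained via $v=u'$, $w(t)=-v(e^{-t})$. *)

(* Defs.v *)
From HB Require Import structures.
From mathcomp Require Import all_boot all_order all_algebra.
From mathcomp Require Import all_classical all_reals all_analysis.
From mathcomp Require Import ess_sup_inf.
Set Implicit Arguments. Unset Strict Implicit. Unset Printing Implicit Defensive.
Import Order.TTheory GRing.Theory Num.Theory.
Import numFieldNormedType.Exports.
Local Open Scope classical_set_scope.
Local Open Scope ring_scope.

Section Defs.
Context {R : realType}.

Definition leb01 := mrestr (@lebesgue_measure R) (measurable_itv `[(0:R), 1]).
Definition lebPos :=
  mrestr (@lebesgue_measure R) (measurable_itv `[(0:R), +oo[).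

Definition Gint (g : R -> R) (x : R) : R :=
  \int[@lebesgue_measure R]_(s in `[0, x]) g s.

Definition forcing (N : nat) (g : R -> R) (t : R) : R :=
  expR ((N%:R - 3) * t) * Gint g (expR (- t)).

(* equation (star) at time t, with w1 = w', w2 = w'' *)
Definition eqn (N : nat) (lam : R) (g : R -> R) (w w1 w2 : R -> R) (t : R) :=
  - w2 t + (N%:R - 2) * w1 t + (N%:R - 1) * w t
  = (N%:R - 1) / 2 * expR (- t) * (w t) ^+ 2 + lam * forcing N g t.

(* w in C^2([0,oo)) (one-sided derivatives at 0), with w' = w1, w'' = w2 *)
Definition C2_halfline (w w1 w2 : R -> R) :=
  (forall t : R, 0 < t -> is_derive t (1:R) w (w1 t) /\ is_derive t (1:R) w1 (w2 t)) /\
  {within `[0, +oo[, continuous w} /\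
  {within `[0, +oo[, continuous w1} /\
  {within `[0, +oo[, continuous w2}.

Definition C2_line (w w1 w2 : R -> R) :=
  (forall t : R, is_derive t (1:R) w (w1 t) /\ is_derive t (1:R) w1 (w2 t)) /\
  continuous w2.

Definition solD (N : nat) (lam : R) (g : R -> R) (w : R -> R) :=
  exists w1 w2 : R -> R, C2_halfline w w1 w2 /\
    (forall t, 0 <= t -> eqn N lam g w w1 w2 t) /\
    w 0 = 0 /\ w t @[t --> +oo] --> 0.

Definition solNav (N : nat) (lam : R) (g : R -> R) (w : R -> R) :=
  exists w1 w2 : R -> R, C2_halfline w w1 w2 /\
    (forall t, 0 <= t -> eqn N lam g w w1 w2 t) /\
    w1 0 - (N%:R - 1) * w 0 = 0 /\ w t @[t --> +oo] --> 0.

Definition solE (N : nat) (lam : R) (g : R -> R) (w : R -> R) :=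
  exists w1 w2 : R -> R, C2_line w w1 w2 /\
    (forall t, eqn N lam g w w1 w2 t) /\
    w t @[t --> +oo] --> 0 /\ w t @[t --> -oo] --> 0.

Definition hyp_g01 (N : nat) (g : R -> R) :=
  (@lebesgue_measure R).-integrable `[0, 1] (EFin \o g) /\
  forcing N g t @[t --> +oo] --> 0 /\
  (\forall x \ae leb01, 0 <= g x) /\
  (0 < ess_sup leb01 (EFin \o g))%E.

Definition hyp_gPos (N : nat) (g : R -> R) :=
  (@lebesgue_measure R).-integrable `[0, +oo[ (EFin \o g) /\
  forcing N g t @[t --> +oo] --> 0 /\
  forcing N g t @[t --> -oo] --> 0 /\
  (\forall x \ae lebPos, 0 <= g x) /\
  (0 < ess_sup lebPos (EFin \o g))%E.

End Defs.

(* Main.v *)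
Set Warnings "-all".
Require Import Defs.
From HB Require Import structures.
From mathcomp Require Import all_boot all_order all_algebra.
From mathcomp Require Import all_classical all_reals all_analysis.
From mathcomp Require Import ess_sup_inf.
From mathcomp Require Import ring lra.
Import Order.TTheory GRing.Theory Num.Theory.
Import numFieldNormedType.Exports.
Local Open Scope classical_set_scope.
Local Open Scope ring_scope.

Section All.
Context {R : realType}.
Local Notation mu := (@lebesgue_measure R).

Lemma dM {f g : R -> R} {df dg x : R} : is_derive x (1:R) f df -> is_derive x (1:R) g dg ->
  is_derive x (1:R) (fun t => f t * g t) (f x * dg + g x * df).
Proof. move=> hf hg. exact: (is_deriveM hf hg). Qed.

Lemma dD {f g : R -> R} {df dg x : R} : is_derive x (1:R) f df -> is_derive x (1:R) g dg ->
  is_derive x (1:R) (fun t => f t + g t) (df + dg).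
Proof. move=> hf hg. exact: (is_deriveD hf hg). Qed.

Lemma dB {f g : R -> R} {df dg x : R} : is_derive x (1:R) f df -> is_derive x (1:R) g dg ->
  is_derive x (1:R) (fun t => f t - g t) (df - dg).
Proof. move=> hf hg. exact: (is_deriveB hf hg). Qed.

Lemma dC (c x : R) : is_derive x (1:R) (fun _ => c) 0.
Proof. exact: is_derive_cst. Qed.

Lemma dI (x : R) : is_derive x (1:R) (fun t : R => t) 1.
Proof. exact: is_derive_id. Qed.

Lemma dE {f : R -> R} {df df' x : R} : is_derive x (1:R) f df -> df = df' -> is_derive x (1:R) f df'.
Proof. by move=> h <-. Qed.

Lemma dX {f : R -> R} {df x : R} (n : nat) : is_derive x (1:R) f df ->
  is_derive x (1:R) (fun t => f t ^+ n.+1) (n.+1%:R * f x ^+ n * df).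
Proof.
move=> hf; elim: n => [|n IH].
  apply: (dE hf); rewrite expr0; ring.
have -> : (fun t => f t ^+ n.+2) = (fun t => f t * f t ^+ n.+1).
  by apply: funext => t; rewrite exprS.
apply: (dE (dM hf IH)).
rewrite !exprS -[n.+2]addn1 -[n.+1]addn1 !natrD; ring.
Qed.

Lemma incr_ge (f df : R -> R) (x y k : R) : x <= y ->
  (forall t, x <= t <= y -> is_derive t 1 f (df t)) ->
  (forall t, x < t < y -> k <= df t) -> k * (y - x) <= f y - f x.
Proof.
move=> xy hd hk; case: (ltgtP x y) xy => // [xy _|<- _]; last by rewrite !subrr mulr0.
have hc : {within `[x, y], continuous f}.
  apply: derivable_within_continuous => t; rewrite in_itv /= => ht.
  by have := hd t ht => -[].
have hd' : forall t, t \in `]x, y[ -> is_derive t (1:R) f (df t).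
  by move=> t; rewrite in_itv /= => /andP[h1 h2]; apply: hd; rewrite !ltW.
have [c] := MVT xy hd' hc.
rewrite in_itv /= => hc' ->.
by apply: ler_wpM2r; [rewrite subr_ge0 ltW|apply: hk].
Qed.
Lemma key_ineq (n K lam F f0 w w1 w2 s s1 e eb : R) :
  1 <= n -> 0 < eb -> eb <= e -> 0 <= s -> s <= 1 -> -1 <= s1 -> s1 <= 1 ->
  0 <= lam -> f0 <= F -> K = 5 * n + 16 ->
  - w2 + (n - 1) * w1 + n * w = n / 2 * e * w ^+ 2 + lam * F ->
  lam * f0 * s ^+ 4 - K ^+ 2 / (2 * n * eb) <=
  (12 * s ^+ 2 * s1 ^+ 2 - 8 * s ^+ 3) * w - s ^+ 4 * w2
  + (n - 1) * (4 * s ^+ 3 * s1) * w + (n - 1) * s ^+ 4 * w1.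
Proof.
move=> n1 eb0 ebe s0 s1' s1l s1u lam0 fF HK Heq.
set B := - (12 * s1 ^+ 2 - 8 * s) - 4 * (n - 1) * s * s1 + n * s ^+ 2.
have e0 : 0 < e by lra.
have HP : (12 * s ^+ 2 * s1 ^+ 2 - 8 * s ^+ 3) * w - s ^+ 4 * w2
  + (n - 1) * (4 * s ^+ 3 * s1) * w + (n - 1) * s ^+ 4 * w1
  = s ^+ 4 * (n / 2 * e * w ^+ 2 + lam * F) - w * s ^+ 2 * B.
  rewrite -Heq /B; ring.
rewrite HP.
have HB : B ^+ 2 <= K ^+ 2.
  have h1 : 0 <= s ^+ 2 <= 1 by apply/andP; split; nra.
  have h2 : 0 <= s1 ^+ 2 <= 1 by apply/andP; split; nra.
  have h3 : -1 <= s * s1 <= 1 by apply/andP; split; nra.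
  case/andP: h1 => h1a h1b; case/andP: h2 => h2a h2b; case/andP: h3 => h3a h3b.
  have hB1 : B <= K by rewrite /B HK; nra.
  have hB2 : - K <= B by rewrite /B HK; nra.
  nra.
have Hsq : 0 <= (n * e * s ^+ 2 * w - B) ^+ 2 by apply: sqr_ge0.
have HY : - (B ^+ 2 / (2 * n * e)) <= n / 2 * e * s ^+ 4 * w ^+ 2 - w * s ^+ 2 * B.
  have hne : 0 < 2 * n * e by apply: mulr_gt0 => //; lra.
  rewrite -subr_ge0 opprK.
  have -> : n / 2 * e * s ^+ 4 * w ^+ 2 - w * s ^+ 2 * B + B ^+ 2 / (2 * n * e)
     = (n * e * s ^+ 2 * w - B) ^+ 2 / (2 * n * e).
    by field; apply/andP; split; apply/eqP; lra.
  by apply: divr_ge0 => //; apply: ltW.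
have HK2 : B ^+ 2 / (2 * n * e) <= K ^+ 2 / (2 * n * eb).
  apply: le_trans (_ : K ^+ 2 / (2 * n * e) <= _).
    by apply: ler_wpM2r => //; rewrite invr_ge0; apply: ltW; apply: mulr_gt0 => //; lra.
  apply: ler_wpM2l; first exact: sqr_ge0.
  rewrite lef_pV2 ?posrE; [|apply: mulr_gt0 => //; lra|apply: mulr_gt0 => //; lra].
  by apply: ler_wpM2l => //; lra.
have Hl : lam * f0 * s ^+ 4 <= s ^+ 4 * (lam * F).
  rewrite mulrC; apply: ler_wpM2l; first exact: exprn_ge0.
  exact: ler_wpM2l.
have -> : s ^+ 4 * (n / 2 * e * w ^+ 2 + lam * F) - w * s ^+ 2 * B
   = s ^+ 4 * (lam * F) + (n / 2 * e * s ^+ 4 * w ^+ 2 - w * s ^+ 2 * B) by ring.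
lra.
Qed.

Definition Lam (N : nat) (a b f0 : R) : R :=
  2 * ((5 * (N%:R - 1) + 16) ^+ 2 / (2 * (N%:R - 1) * expR (- b)))
    / (f0 * (((b - a) ^+ 2 / 16) ^+ 4)).

Lemma core (N : nat) (hN : (2 <= N)%N) (a b lam f0 : R) (F w w1 w2 : R -> R) :
  a < b -> b - a <= 1 -> 0 < lam -> 0 < f0 ->
  (forall x, a <= x <= b -> is_derive x (1:R) w (w1 x) /\ is_derive x (1:R) w1 (w2 x)) ->
  (forall x, a < x < b -> - w2 x + (N%:R - 2) * w1 x + (N%:R - 1) * w x
       = (N%:R - 1) / 2 * expR (- x) * (w x) ^+ 2 + lam * F x) ->
  (forall x, a < x < b -> f0 <= F x) -> lam <= Lam N a b f0.
Proof.
move=> ab abL lam0 f00 hder heq hF.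
set n : R := N%:R - 1.
have n1 : 1 <= n.
  rewrite /n lerBrDr (_ : 1 + 1 = 2%:R) // ler_nat //.
set K : R := 5 * n + 16.
set eb := expR (- b).
have eb0 : 0 < eb by apply: expR_gt0.
set M := K ^+ 2 / (2 * n * eb).
pose s (t : R) : R := (t - a) * (b - t).
pose s1 (t : R) : R := a + b - 2 * t.
pose phi (t : R) : R := s t ^+ 4.
pose phi1 (t : R) : R := 4 * s t ^+ 3 * s1 t.
pose phi2 (t : R) : R := 12 * s t ^+ 2 * s1 t ^+ 2 - 8 * s t ^+ 3.
pose P (t : R) : R := phi1 t * w t - phi t * w1 t + (n - 1) * phi t * w t.
pose Q (t : R) : R := P t + M * t.
pose dQ (t : R) : R := phi2 t * w t - phi t * w2 t + (n - 1) * phi1 t * w t + (n - 1) * phi t * w1 t + M.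
have ds : forall x, is_derive x (1:R) s (s1 x).
  move=> x; have h := dM (dB (dI x) (dC a x)) (dB (dC b x) (dI x)).
  by apply: (dE h); rewrite /s1; ring.
have dphi : forall x, is_derive x (1:R) phi (phi1 x).
  move=> x; apply: (dE (dX 3 (ds x))); rewrite /phi1; ring.
have ds1 : forall x, is_derive x (1:R) s1 (-2).
  move=> x; apply: (dE (dB (dC (a + b) x) (dM (dC 2 x) (dI x)))); ring.
have dphi1 : forall x, is_derive x (1:R) phi1 (phi2 x).
  move=> x; apply: (dE (dM (dM (dC 4 x) (dX 2 (ds x))) (ds1 x))).
  rewrite /phi2; ring.
have dQx : forall x, a <= x <= b -> is_derive x (1:R) Q (dQ x).
  move=> x hx; have [hw hw1] := hder x hx.
  have h1 := dM (dphi1 x) hw.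
  have h2 := dM (dphi x) hw1.
  have h3 := dM (dM (dC (n - 1) x) (dphi x)) hw.
  have h4 := dM (dC M x) (dI x).
  have h := dD (dD (dB h1 h2) h3) h4.
  apply: (dE h).
  by rewrite /dQ; ring.
have dQge : forall x, a < x < b -> lam * f0 * phi x <= dQ x.
 move=> x hx; case/andP: (hx) => xa xb.
  have xa' := ltW xa; have xb' := ltW xb.
  have hs0 : 0 <= s x by rewrite /s; apply: mulr_ge0; lra.
  have hs1 : s x <= 1 by rewrite /s; nra.
  have := @key_ineq n K lam (F x) f0 (w x) (w1 x) (w2 x) (s x) (s1 x) (expR (- x)) eb n1 eb0.
  have he : eb <= expR (- x) by rewrite /eb ler_expR; lra.
  move=> /(_ he hs0 hs1); rewrite /s1.
  have h1 : -1 <= a + b - 2 * x by lra.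
  have h2 : a + b - 2 * x <= 1 by lra.
  move=> /(_ h1 h2 (ltW lam0) (hF x hx) erefl).
  have := heq x hx.
  rewrite (_ : N%:R - 2 = n - 1); last by rewrite /n; ring.
  move=> e1 /(_ e1) hk.
  rewrite /dQ /phi2 /phi1 /phi /s1 -/M; by rewrite -lerBlDr.
have dQ0 : forall x, a < x < b -> 0 <= dQ x.
  move=> x hx; apply: le_trans (dQge x hx).
  apply: mulr_ge0; first by apply: mulr_ge0; lra.
  rewrite /phi; apply: exprn_ge0; rewrite /s; case/andP: hx => h1 h2; apply: mulr_ge0; lra.
set L := b - a.
set a' := a + L / 4.
set b' := b - L / 4.
set sig := (L ^+ 2 / 16) ^+ 4.
have hL : 0 < L by rewrite /L; lra.
have hLd : L = b - a by [].
have hLa : a' = a + L / 4 by [].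
have hLb : b' = b - L / 4 by [].
have i1 : 0 * (a' - a) <= Q a' - Q a.
  apply: (incr_ge Q dQ a a' 0); first by rewrite /a'; lra.
    by move=> t /andP[h1 h2]; apply: dQx; rewrite /a' in h2; apply/andP; split; lra.
  by move=> t /andP[h1 h2]; apply: dQ0; rewrite /a' in h2; apply/andP; split; lra.
have i3 : 0 * (b - b') <= Q b - Q b'.
  apply: (incr_ge Q dQ b' b 0); first by rewrite /b'; lra.
    by move=> t /andP[h1 h2]; apply: dQx; rewrite /b' in h1; apply/andP; split; lra.
  by move=> t /andP[h1 h2]; apply: dQ0; rewrite /b' in h1; apply/andP; split; lra.
have i2 : lam * f0 * sig * (b' - a') <= Q b' - Q a'.
  apply: (incr_ge Q dQ a' b' (lam * f0 * sig)); first by rewrite /a' /b'; lra.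
    by move=> t /andP[h1 h2]; apply: dQx; rewrite /a' /b' in h1 h2; apply/andP; split; lra.
  move=> t /andP[h1 h2]; rewrite /a' /b' in h1 h2.
  have ht' : a < t < b by apply/andP; split; lra.
  apply: le_trans (dQge t ht').
  apply: ler_wpM2l; first by apply: mulr_ge0; lra.
  rewrite /sig /phi; apply: lerXn2r.
  - by rewrite nnegrE; apply: divr_ge0 => //; apply: sqr_ge0.
  - by rewrite nnegrE /s; apply: mulr_ge0; lra.
  rewrite /s.
  have h3 : L / 4 <= t - a by lra.
  have h4 : L / 4 <= b - t by lra.
  have -> : L ^+ 2 / 16 = (L / 4) * (L / 4) by rewrite expr2; field.
  by apply: ler_pM => //; lra.
have sa : s a = 0 by rewrite /s subrr mul0r.
have sb : s b = 0 by rewrite /s subrr mulr0.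
have hQ : Q b - Q a = M * L.
  by rewrite /Q /P /phi1 /phi sa sb /L; ring.
have hsum : lam * f0 * sig * (L / 2) <= M * L.
  rewrite -hQ (_ : Q b - Q a = (Q a' - Q a) + (Q b' - Q a') + (Q b - Q b')); last by ring.
  rewrite (_ : L / 2 = b' - a'); last by rewrite /b' /a' /L; field.
  lra.
have sig0 : 0 < sig.
  by rewrite /sig; apply: exprn_gt0; apply: divr_gt0 => //; apply: exprn_gt0.
have hf : lam * (f0 * sig) <= 2 * M.
  have two : (0 : R) < 2 by lra.
  have h2 : lam * (f0 * sig) * L <= 2 * M * L.
    have e1 : lam * (f0 * sig) * L = 2 * (lam * f0 * sig * (L / 2)) by field.
    have e2 : 2 * M * L = 2 * (M * L) by ring.
    by rewrite e1 e2 (ler_pM2l two).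
  by rewrite (ler_pM2r hL) in h2.
have -> : Lam N a b f0 = 2 * M / (f0 * sig) by [].
by rewrite ler_pdivlMr //; apply: mulr_gt0.
Qed.


Lemma ae_from_restr (Dom : set (measurableTypeR R)) (mDom : measurable Dom) (g : R -> R) :
  (\forall x \ae mrestr mu mDom, 0 <= g x) -> {ae mu, forall x, Dom x -> 0 <= g x}.
Proof.
case=> A [mA A0 sub]; exists (A `&` Dom); split.
- exact: measurableI.
- by move: A0; rewrite /mrestr.
- move=> x /= /not_implyP [Dx ng]; split => //; exact: sub.
Qed.

Lemma int_abs (Dom D : set (measurableTypeR R)) (mDom : measurable Dom) (mD : measurable D)
  (DD : D `<=` Dom) (g : R -> R) :
  mu.-integrable Dom (EFin \o g) -> {ae mu, forall x, Dom x -> 0 <= g x} ->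
  (\int[mu]_(x in D) (g x)%:E = \int[mu]_(x in D) `|(g x)%:E|)%E.
Proof.
move=> hi hae.
have hiD : mu.-integrable D (EFin \o g) := integrableS mDom mD DD hi.
apply: ae_eq_integral => //.
- exact: (measurable_int _ hiD).
- exact: (measurable_int _ (integrable_abse hiD)).
apply: filterS hae => x H Dx.
by rewrite /= ger0_norm //; apply: H; apply: DD.
Qed.

Lemma Gmono (Dom : set (measurableTypeR R)) (mDom : measurable Dom) (g : R -> R) (x y : R) :
  mu.-integrable Dom (EFin \o g) -> {ae mu, forall x, Dom x -> 0 <= g x} ->
  `[0, y] `<=` Dom -> 0 <= x -> x <= y -> Gint g x <= Gint g y.
Proof.
move=> hi hae sub x0 xy.
have hU : `[0, y]%classic = `[0, x]%classic `|` `]x, y]%classic.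
  by apply: itv_bndbnd_setU; rewrite bnd_simp.
rewrite /Gint hU Rintegral_setU //; last first.
- apply/disj_setPS => z [] /=; rewrite !in_itv /= => /andP[_ h1] /andP[h2 _]; lra.
- by rewrite -hU; apply: integrableS hi.
rewrite lerDl /Rintegral.
apply: fine_ge0.
rewrite (@int_abs Dom) //; first by apply: integral_ge0.
by apply: subset_trans sub; apply: subset_itv; rewrite bnd_simp.
Qed.

Lemma Gzero (Dom : set (measurableTypeR R)) (mDom : measurable Dom) (g : R -> R) (X : R) :
  mu.-integrable Dom (EFin \o g) -> {ae mu, forall x, Dom x -> 0 <= g x} ->
  `[0, X] `<=` Dom -> Gint g X <= 0 -> ae_eq mu `[0, X]%classic (EFin \o g) (cst 0%E).
Proof.
move=> hi hae sub hG.
have hi' : mu.-integrable `[0, X] (EFin \o g) by apply: integrableS hi.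
have := hi'; move=> /integrableP [mg fin].
apply/(ae_eq_integral_abs _ _ mg); first exact: measurable_itv.
have ge0 : (0 <= \int[mu]_(x in `[0%R, X]%classic) `|(EFin \o g) x|)%E by apply: integral_ge0.
apply/eqP; rewrite eq_le ge0 andbT; rewrite leNgt; apply/negP => hpos.
have : 0 < Gint g X.
  rewrite /Gint /Rintegral; apply: fine_gt0; apply/andP; split.
    by rewrite (@int_abs Dom).
  by rewrite (@int_abs Dom).
lra.
Qed.

Lemma ess_le0 (Dom : set (measurableTypeR R)) (mDom : measurable Dom) (g : R -> R)
  (X : nat -> R) (Z : set (measurableTypeR R)) : mu.-negligible Z ->
  Dom `<=` Z `|` \bigcup_n `[0, X n]%classic ->
  (forall n, ae_eq mu `[0, X n]%classic (EFin \o g) (cst 0%E)) ->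
  (ess_sup (mrestr mu mDom) (EFin \o g) <= 0)%E.
Proof.
move=> nZ cov hz; apply/ess_supP.
have hn : mu.-negligible (Z `|` \bigcup_n ~` [set x | `[0, X n]%classic x -> (EFin \o g) x = cst 0%E x]).
  apply: negligibleU => //; apply: negligible_bigcup => n; exact: hz.
case: hn => A [mA A0 sA].
exists (A `|` ~` Dom); split.
- by apply: measurableU => //; apply: measurableC.
- rewrite /mrestr; apply/eqP; rewrite -measure_le0 -A0; apply: le_measure.
  + by rewrite inE; apply: measurableI => //; apply: measurableU => //; apply: measurableC.
  + by rewrite inE.
  + by move=> x [[Ax|nDx] Dx] //.
- move=> x /= hx.
  have [Dx|nDx] := pselect (Dom x); last by right.
  left; apply: sA.
  case: (cov x Dx) => [Zx|[n _ hn]]; first by left.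
  right; exists n => //= h; apply: hx; rewrite (h hn) /=; exact: lexx.
Qed.

Lemma expR_lb (c a b t : R) : a <= t -> t <= b ->
  Num.min (expR (c * a)) (expR (c * b)) <= expR (c * t).
Proof.
move=> ha hb; rewrite ge_min; have [c0|c0] := leP 0 c.
  by apply/orP; left; rewrite ler_expR; apply: ler_wpM2l.
apply/orP; right; rewrite ler_expR; nra.
Qed.

Lemma min_exp_gt0 (u v : R) : 0 < Num.min (expR u) (expR v).
Proof. by rewrite lt_min !expR_gt0. Qed.

Lemma finish (N : nat) (hN : (2 <= N)%N) (g : R -> R) (a b f0 : R) :
  a < b -> b - a <= 1 -> 0 < f0 ->
  (forall t, a < t < b -> f0 <= forcing N g t) ->
  exists2 lam0 : R, 0 < lam0 & forall lam, lam0 < lam -> forall w w1 w2 : R -> R,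
   (forall x, a <= x <= b -> is_derive x (1:R) w (w1 x) /\ is_derive x (1:R) w1 (w2 x)) ->
   (forall x, a < x < b -> Defs.eqn N lam g w w1 w2 x) -> False.
Proof.
move=> ab abL f00 hF.
exists (Num.max 1 (Lam N a b f0)); first by rewrite lt_max ltr01.
move=> lam; rewrite gt_max => /andP[l1 l2] w w1 w2 hd he.
have := @core N hN a b lam f0 (forcing N g) w w1 w2 ab abL (lt_trans ltr01 l1) f00 hd he hF.
by rewrite leNgt l2.
Qed.

Lemma forcing_lb (N : nat) (hN : (2 <= N)%N) (Dom : set (measurableTypeR R))
  (mDom : measurable Dom) (g : R -> R) (X a b t : R) :
  mu.-integrable Dom (EFin \o g) -> {ae mu, forall x, Dom x -> 0 <= g x} ->
  0 < X -> 0 < Gint g X -> `[0, expR (- t)] `<=` Dom -> X <= expR (- t) ->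
  a <= t -> t <= b ->
  Num.min (expR ((N%:R - 3) * a)) (expR ((N%:R - 3) * b)) * Gint g X <= forcing N g t.
Proof.
move=> hi hae X0 GX sub Xt ha hb; rewrite /forcing.
apply: ler_pM.
- by rewrite le_min !ltW ?expR_gt0.
- exact: ltW.
- exact: expR_lb.
- by apply: (Gmono _ mDom g) => //; exact: ltW.
Qed.

Lemma posX01 (N : nat) (g : R -> R) : hyp_g01 N g ->
  exists X, 0 < X < 1 /\ 0 < Gint g X.
Proof.
case=> hi [_ [hae hess]].
have hae' := @ae_from_restr _ (measurable_itv _) g hae.
apply: contrapT => H.
pose X (n : nat) : R := 1 - n.+2%:R^-1.
have X0 : forall n, 0 < X n.
  move=> n; rewrite /X subr_gt0 invf_lt1 ?ltr1n //.
have X1 : forall n, X n < 1.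
  by move=> n; rewrite /X ltrBlDr ltrDl invr_gt0 ltr0n.
have sub : forall n, `[0, X n] `<=` `[0, 1].
  move=> n; apply: subset_itv; rewrite bnd_simp //; exact: ltW.
have hz : forall n, ae_eq mu `[0, X n]%classic (EFin \o g) (cst 0%E).
  move=> n; apply: (Gzero _ (measurable_itv _) g (X n) hi hae'); first exact: sub.
  rewrite leNgt; apply/negP => hp; apply: H; exists (X n); split => //.
  by rewrite X0 X1.
have nZ : mu.-negligible [set (1:R)].
  by exists [set 1]; split; [exact: measurable_set1|exact: lebesgue_measure_set1|].
have := @ess_le0 _ (measurable_itv `[(0:R), 1]) g X [set 1] nZ.
move=> /(_ _ hz) hle.
suff : (ess_sup leb01 (EFin \o g) <= 0)%E by rewrite leNgt hess.
apply: hle => x; rewrite /= in_itv /= => /andP[x0 x1].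
have [->|xne] := eqVneq x 1; first by left.
have xl1 : x < 1 by rewrite lt_neqAle xne x1.
have [k hk] := ltr_add_invr xl1.
right; exists k => //=; rewrite in_itv /= x0 /= /X.
have : k.+2%:R^-1 <= k.+1%:R^-1 :> R.
  by rewrite lef_pV2 ?posrE ?ltr0n // ler_nat.
move=> hh; rewrite lerBrDr; apply: le_trans (ltW hk); by rewrite lerD2l.
Qed.

Lemma posXpos (N : nat) (g : R -> R) : hyp_gPos N g ->
  exists X, 0 < X /\ 0 < Gint g X.
Proof.
case=> hi [_ [_ [hae hess]]].
have hae' := @ae_from_restr _ (measurable_itv _) g hae.
apply: contrapT => H.
pose X (n : nat) : R := n.+1%:R.
have sub : forall n, `[0, X n] `<=` `[0, +oo[.
  by move=> n; apply: subset_itv; rewrite bnd_simp.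
have hz : forall n, ae_eq mu `[0, X n]%classic (EFin \o g) (cst 0%E).
  move=> n; apply: (Gzero _ (measurable_itv _) g (X n) hi hae'); first exact: sub.
  rewrite leNgt; apply/negP => hp; apply: H; exists (X n); split => //.
have nZ : mu.-negligible (@set0 R) by exact: negligible_set0.
have := @ess_le0 _ (measurable_itv `[(0:R), +oo[) g X set0 nZ.
move=> /(_ _ hz) hle.
suff : (ess_sup lebPos (EFin \o g) <= 0)%E by rewrite leNgt hess.
apply: hle => x; rewrite /= in_itv /= andbT => x0.
right; exists (Num.trunc x) => //=; rewrite in_itv /= x0 /= /X.
exact: ltW (truncnS_gt x).
Qed.
End All.

Lemma caseDN (R : realType) (N : nat) (hN : (2 <= N)%N) (g : R -> R) : hyp_g01 N g ->
  exists2 lam0 : R, 0 < lam0 & forall lam, lam0 < lam -> forall w w1 w2 : R -> R,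
    C2_halfline w w1 w2 -> (forall t, 0 <= t -> Defs.eqn N lam g w w1 w2 t) -> False.
Proof.
move=> hg; have [X [/andP[X0 X1] GX]] := posX01 N g hg.
case: (hg) => hi [_ [hae _]]; have hae' := @ae_from_restr R _ (measurable_itv _) g hae.
set b := - ln X.
have b0 : 0 < b by rewrite /b oppr_gt0; apply: ln_lt0; rewrite X0 X1.
have eb : expR (- b) = X by rewrite /b opprK lnK // posrE.
set L := Num.min 1 (b / 2).
have L0 : 0 < L by rewrite lt_min ltr01 divr_gt0.
have L1 : L <= 1 by rewrite ge_min lexx.
have L2 : L <= b / 2 by rewrite ge_min lexx orbT.
set a := b - L.
have a0 : 0 < a by rewrite /a; lra.
have ab : a < b by rewrite /a; lra.
have abL : b - a <= 1 by rewrite /a; lra.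
set f0 := Num.min (expR ((N%:R - 3) * a)) (expR ((N%:R - 3) * b)) * Gint g X.
have f00 : 0 < f0 by apply: mulr_gt0 => //; apply: min_exp_gt0.
have hF : forall t, a < t < b -> f0 <= forcing N g t.
  move=> t /andP[h1 h2].
  apply: (@forcing_lb R N hN _ (measurable_itv _) g X a b t hi hae' X0 GX).
  - apply: subset_itv; rewrite bnd_simp //.
    by rewrite -expR0 ler_expR; lra.
  - by rewrite -eb ler_expR; lra.
  - exact: ltW.
  - exact: ltW.
have [lam0 l0 H] := @finish R N hN g a b f0 ab abL f00 hF.
exists lam0 => // lam hl w w1 w2 [hd _] he.
apply: (H lam hl w w1 w2).
  by move=> x /andP[h1 h2]; apply: hd; lra.
by move=> x /andP[h1 h2]; apply: he; lra.
Qed.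

Lemma caseE (R : realType) (N : nat) (hN : (2 <= N)%N) (g : R -> R) : hyp_gPos N g ->
  exists2 lam0 : R, 0 < lam0 & forall lam, lam0 < lam -> forall w : R -> R, ~ solE N lam g w.
Proof.
move=> hg; have [X [X0 GX]] := posXpos N g hg.
case: (hg) => hi [_ [_ [hae _]]]; have hae' := @ae_from_restr R _ (measurable_itv _) g hae.
set b := - ln X.
have eb : expR (- b) = X by rewrite /b opprK lnK // posrE.
set a := b - 1.
have ab : a < b by rewrite /a; lra.
have abL : b - a <= 1 by rewrite /a; lra.
set f0 := Num.min (expR ((N%:R - 3) * a)) (expR ((N%:R - 3) * b)) * Gint g X.
have f00 : 0 < f0 by apply: mulr_gt0 => //; apply: min_exp_gt0.
have hF : forall t, a < t < b -> f0 <= forcing N g t.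
  move=> t /andP[h1 h2].
  apply: (@forcing_lb R N hN _ (measurable_itv _) g X a b t hi hae' X0 GX).
  - by apply: subset_itv; rewrite bnd_simp.
  - by rewrite -eb ler_expR; lra.
  - exact: ltW.
  - exact: ltW.
have [lam0 l0 H] := @finish R N hN g a b f0 ab abL f00 hF.
exists lam0 => // lam hl w [w1 [w2 [[hd _] [he _]]]].
apply: (H lam hl w w1 w2).
  by move=> x _; apply: hd.
by move=> x _; apply: he.
Qed.

Theorem theorem4p14 (R : realType) (N : nat) (hN : (2 <= N)%N) :
  (forall g : R -> R, hyp_g01 N g ->
     exists2 lam0 : R, 0 < lam0 &
       forall lam : R, lam0 < lam -> forall w : R -> R, ~ solD N lam g w) /\
  (forall g : R -> R, hyp_g01 N g ->
     exists2 lam0 : R, 0 < lam0 &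
       forall lam : R, lam0 < lam -> forall w : R -> R, ~ solNav N lam g w) /\
  (forall g : R -> R, hyp_gPos N g ->
     exists2 lam0 : R, 0 < lam0 &
       forall lam : R, lam0 < lam -> forall w : R -> R, ~ solE N lam g w).
Proof.
split; [|split].
- move=> g hg; have [lam0 l0 H] := @caseDN R N hN g hg.
  exists lam0 => // lam hl w [w1 [w2 [hc [he _]]]]; exact: (H lam hl w w1 w2 hc he).
- move=> g hg; have [lam0 l0 H] := @caseDN R N hN g hg.
  exists lam0 => // lam hl w [w1 [w2 [hc [he _]]]]; exact: (H lam hl w w1 w2 hc he).
- move=> g hg; exact: (@caseE R N hN g hg).
Qed.
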